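(* Let $d\ge1$. For all disjoint rectangles $P,Q\subseteq[0,1)^d$ that are translates of each other, the rectangle transposition $\tau_{P,Q}$ is a finite product of restricted shuffles in $\operatorname{Rec}_d$.
   Context: A rectangle in $\mathbb{R}^d$ is a set $\prod_{i=1}^d[a_i,b_i)$ with $a_i<b_i$ real. $\operatorname{Rec}_d$ is the group of bijections $f$ of $[0,1)^d$ for which there is a finite partition of $[0,1)^d$ into rectangles on each of which $f$ is a translation. For disjoint rectangles $P,Q$ with $Q=P+v$, $\tau_{P,Q}$ is translation by $v$ on $P$, by $-v$ on $Q$, and the identity elsewhere. A restricted shuffle: for a rectangle $P=\prod_j[a_j,b_j)\subseteq[0,1)^d$, an index $i$ and $c\in(a_i,b_i)$, let $P'$ (resp. $P''$) be obtained from $P$ by replacing $[a_i,b_i)$ by $[a_i,c)$ (resp. $[c,b_i)$); the restricted shuffle is translation by $(b_i-c)e_i$ on $P'$, by $-(c-a_i)e_i$ on $P''$, and the identity outside $P$ ($e_i$ the standard basis vector). *)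

(* Defs.v *)
From mathcomp Require Import all_boot all_order all_algebra.
From mathcomp Require Import reals.
Set Implicit Arguments. Unset Strict Implicit. Unset Printing Implicit Defensive.
Import Order.TTheory GRing.Theory Num.Theory.
Local Open Scope ring_scope.

Section Defs.
Variables (R : realType) (d : nat).
Definition point := 'I_d -> R.

Definition in_rect (a b : point) (x : point) : bool :=
  [forall i, (a i <= x i) && (x i < b i)].

Definition is_rect (a b : point) : Prop := forall i, a i < b i.

Definition in_cube (x : point) : bool := in_rect (fun _ => 0) (fun _ => 1) x.

Definition rect_in_cube (a b : point) : Prop :=
  forall x, in_rect a b x -> in_cube x.

Definition padd (x v : point) : point := fun j => x j + v j.
Definition psub (x v : point) : point := fun j => x j - v j.

Definition shift_e (i : 'I_d) (t : R) (x : point) : point :=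
  fun j => if j == i then x j + t else x j.

Definition tau (a b v : point) (x : point) : point :=
  if in_rect a b x then padd x v
  else if in_rect (padd a v) (padd b v) x then psub x v
  else x.

Record shuffle_data := ShuffleData {
  sh_a : point; sh_b : point; sh_i : 'I_d; sh_c : R;
  sh_rect : is_rect sh_a sh_b;
  sh_in_cube : rect_in_cube sh_a sh_b;
  sh_c_gt : sh_a sh_i < sh_c;
  sh_c_lt : sh_c < sh_b sh_i }.

Definition restricted_shuffle (s : shuffle_data) (x : point) : point :=
  let a := sh_a s in let b := sh_b s in let i := sh_i s in let c := sh_c s in
  if in_rect a b x then
    (if x i < c then shift_e i (b i - c) x else shift_e i (- (c - a i)) x)
  else x.

Definition shuffle_product (s : seq shuffle_data) : point -> point :=
  foldr (fun sh f => restricted_shuffle sh \o f) id s.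
End Defs.

(* Main.v *)
Require Import Defs.
From mathcomp Require Import all_boot all_order all_algebra.
From mathcomp Require Import reals.
From mathcomp Require Import lra.
From Stdlib Require Import FunctionalExtensionality.
Import Order.TTheory GRing.Theory Num.Theory.
Local Open Scope ring_scope.
Set Implicit Arguments. Unset Strict Implicit. Unset Printing Implicit Defensive.

Definition gen {R : realType} {d : nat} (f : point R d -> point R d) :=
  exists s : seq (shuffle_data R d), forall x, in_cube x -> f x = shuffle_product s x.

Lemma sp_cat (R : realType) d (s t : seq (shuffle_data R d)) x :
  shuffle_product (s ++ t) x = shuffle_product s (shuffle_product t x).
Proof. by elim: s => //= sh s IH; rewrite /shuffle_product /= -/(shuffle_product _ _) IH. Qed.

Lemma gen_id (R : realType) d : @gen R d id.
Proof. by exists [::]. Qed.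

Lemma gen_comp (R : realType) d (f g : point R d -> point R d) :
  gen f -> gen g -> (forall x, in_cube x -> in_cube (g x)) -> gen (fun x => f (g x)).
Proof.
move=> [s hs] [t ht] hg; exists (s ++ t) => x hx.
by rewrite sp_cat -ht // hs // hg.
Qed.

Lemma gen_ext (R : realType) d (f g : point R d -> point R d) :
  (forall x, in_cube x -> f x = g x) -> gen g -> gen f.
Proof. by move=> h [s hs]; exists s => x hx; rewrite h // hs. Qed.

Definition cok (R : realType) d (a b : point R d) := forall l, 0 <= a l /\ b l <= 1.

Lemma in_rectP (R : realType) d (a b x : point R d) :
  reflect (forall l, a l <= x l < b l) (in_rect a b x).
Proof. exact: forallP. Qed.

Lemma rect_cok (R : realType) d (a b : point R d) :
  is_rect a b -> rect_in_cube a b -> cok a b.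
Proof.
move=> hr hc l.
have ha : in_rect a b a by apply/in_rectP => j; rewrite lexx hr.
have /in_rectP /(_ l) := hc a ha; rewrite /= => /andP[h0 _]; split => //.
rewrite leNgt; apply/negP => hb.
pose t := if a l <= 1 then 1 else a l.
pose x := fun j => if j == l then t else a j.
have hx : in_rect a b x.
  apply/in_rectP => j; rewrite /x; case: eqVneq => [->|_]; last by rewrite lexx hr.
  have := hr l; rewrite /t; case: ifP => h ?; apply/andP; split; lra.
have /in_rectP /(_ l) := hc x hx; rewrite /= /x eqxx /t.
case: ifP => h; lra.
Qed.

Lemma cok_rect (R : realType) d (a b : point R d) : cok a b -> rect_in_cube a b.
Proof.
move=> h x /in_rectP hx; apply/in_rectP => l /=.
have := h l; have := hx l; move=> ? ?; apply/andP; split; lra.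
Qed.

Ltac pteq := apply: functional_extensionality => ?; rewrite /padd /psub /=; lra.

Lemma in_rect_shift (R : realType) d (a b v y : point R d) :
  in_rect (padd a v) (padd b v) y = in_rect a b (psub y v).
Proof.
apply/in_rectP/in_rectP => h l; have := h l; rewrite /padd /psub => /andP[? ?];
  apply/andP; split; lra.
Qed.

Lemma psub_padd (R : realType) d (x v : point R d) : psub (padd x v) v = x.
Proof. pteq. Qed.
Lemma padd_psub (R : realType) d (x v : point R d) : padd (psub x v) v = x.
Proof. pteq. Qed.

Lemma tauE (R : realType) d (a b v y : point R d) :
  tau a b v y = if in_rect a b y then padd y v
                else if in_rect a b (psub y v) then psub y v else y.
Proof. by rewrite /tau in_rect_shift. Qed.

Definition D (R : realType) d (a b v : point R d) :=
  forall x, ~~ (in_rect a b x && in_rect (padd a v) (padd b v) x).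

Lemma DP (R : realType) d (a b v : point R d) :
  D a b v -> forall y, in_rect a b y -> in_rect a b (psub y v) = false.
Proof. by move=> h y hy; have := h y; rewrite hy in_rect_shift => /negbTE. Qed.

Lemma sepD (R : realType) d (a b v : point R d) l :
  b l - a l <= `|v l| -> D a b v.
Proof.
move=> h x; apply/negP => /andP[/in_rectP/(_ l) h1 /in_rectP/(_ l)].
rewrite /padd => h2.
case: (lerP 0 (v l)) => hv; [rewrite ger0_norm in h | rewrite ltr0_norm in h]; lra.
Qed.

Lemma tau_cube (R : realType) d (a b v : point R d) :
  rect_in_cube a b -> rect_in_cube (padd a v) (padd b v) ->
  forall x, in_cube x -> in_cube (tau a b v x).
Proof.
move=> ha hq x hx; rewrite /tau; case: ifP => h1.
  by apply: hq; rewrite in_rect_shift psub_padd.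
by case: ifP => h2 //; apply: ha; rewrite -in_rect_shift.
Qed.

Lemma conj_tau (R : realType) d (a b v w : point R d) :
  D a b v -> D a b w -> D (padd a w) (padd b w) (psub v w) ->
  forall x, tau a b v x =
    tau (padd a w) (padd b w) (psub v w)
      (tau a b w (tau (padd a w) (padd b w) (psub v w) x)).
Proof.
move=> Dv Dw Dr x.
have e1 y : psub (psub y (psub v w)) w = psub y v by pteq.
have tRE y : tau (padd a w) (padd b w) (psub v w) y =
   if in_rect a b (psub y w) then padd y (psub v w)
   else if in_rect a b (psub y v) then psub y (psub v w) else y.
  by rewrite tauE !in_rect_shift e1.
have dv := DP Dv; have dw := DP Dw.
have dr y : in_rect a b (psub y w) -> in_rect a b (psub y v) = false.
  move=> h; have h' : in_rect (padd a w) (padd b w) y by rewrite in_rect_shift.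
  by have := DP Dr h'; rewrite in_rect_shift e1.
rewrite tauE.
case: ifP => hx.
  have -> : tau (padd a w) (padd b w) (psub v w) x = x by rewrite tRE dw // dv.
  rewrite [tau a b w x]tauE hx tRE psub_padd hx; pteq.
case: ifP => hxv.
  have -> : tau (padd a w) (padd b w) (psub v w) x = psub x (psub v w).
    rewrite tRE hxv; case: ifP => // h; by rewrite dr in hxv.
  have e2 : psub (psub x (psub v w)) w = psub x v by pteq.
  have hy : in_rect a b (psub x (psub v w)) = false.
    apply/negbTE/negP => h; move: (dw _ h); by rewrite e2 hxv.
  rewrite [tau a b w _]tauE hy e2 hxv tRE (dw _ hxv) (dv _ hxv) //.
case hxw: (in_rect a b (psub x w)).
  have -> : tau (padd a w) (padd b w) (psub v w) x = padd x (psub v w).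
    by rewrite tRE hxw.
  have e3 : psub (padd x (psub v w)) v = psub x w by pteq.
  have hy : in_rect a b (padd x (psub v w)) = false.
    apply/negbTE/negP => h; move: (dv _ h); by rewrite e3 hxw.
  have hyw : in_rect a b (psub (padd x (psub v w)) w) = false.
    apply/negbTE/negP => h; move: (dr _ h); by rewrite e3 hxw.
  rewrite [tau a b w _]tauE hy hyw tRE hyw e3 hxw; pteq.
have -> : tau (padd a w) (padd b w) (psub v w) x = x by rewrite tRE hxw hxv.
by rewrite [tau a b w _]tauE hx hxw tRE hxw hxv.
Qed.

Definition upd (R : realType) d (p : point R d) (j : 'I_d) (c : R) : point R d :=
  fun l => if l == j then c else p l.

Lemma split_tau (R : realType) d (a b v : point R d) j c :
  a j <= c <= b j -> D a b v -> forall x,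
  tau a b v x = tau a (upd b j c) v (tau (upd a j c) b v x).
Proof.
move=> /andP[hc1 hc2] Dv x.
have mU y : in_rect a b y = in_rect a (upd b j c) y || in_rect (upd a j c) b y.
  apply/idP/orP.
    move/in_rectP => h; case: (ltrP (y j) c) => hc; [left|right];
      apply/in_rectP => l; rewrite /upd; case: eqVneq => [->|_]; rewrite ?h //;
      have := h j; move=> /andP[? ?]; apply/andP; split; lra.
  case=> /in_rectP h; apply/in_rectP => l; have := h l; rewrite /upd;
    case: eqVneq => [->|_] // /andP[? ?]; apply/andP; split; lra.
have m12 y : in_rect a (upd b j c) y -> in_rect (upd a j c) b y = false.
  move=> /in_rectP /(_ j); rewrite /upd eqxx => /andP[? ?].
  apply/negbTE/negP => /in_rectP /(_ j); rewrite /upd eqxx => /andP[? ?]; lra.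
have s1 y : in_rect a (upd b j c) y -> in_rect a b y by rewrite mU => ->.
have s2 y : in_rect (upd a j c) b y -> in_rect a b y by rewrite mU orbC => ->.
have n1 y : in_rect a (upd b j c) y = false -> in_rect (upd a j c) b y = false -> in_rect a b y = false.
  by rewrite mU => -> ->.
have dv := DP Dv.
rewrite !tauE.
case h1: (in_rect a (upd b j c) x).
  rewrite (s1 _ h1) (m12 _ h1).
  have -> : in_rect (upd a j c) b (psub x v) = false.
    by apply/negbTE/negP => /s2; rewrite dv // s1.
  by rewrite h1.
case h2: (in_rect (upd a j c) b x).
  rewrite (s2 _ h2) psub_padd h1.
  have hq : in_rect a b (padd x v) = false.
    apply/negbTE/negP => h; have := dv _ h; by rewrite psub_padd (s2 _ h2).
  case h3: (in_rect a (upd b j c) (padd x v)) => //.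
  by rewrite (s1 _ h3) in hq.
rewrite /= (n1 _ h1 h2).
case h4: (in_rect a (upd b j c) (psub x v)).
  by rewrite (s1 _ h4) (m12 _ h4) h1 h4.
case h5: (in_rect (upd a j c) b (psub x v)).
  rewrite (s2 _ h5) /= h4.
  case: ifP => h6 //.
  by have := dv _ (s2 _ h5); rewrite (s1 _ h6).
by rewrite (n1 _ h4 h5) /= h1 h4.
Qed.

Definition Eo (R : realType) d (i : 'I_d) (p q y : point R d) :=
  [forall l, (l != i) ==> (p l <= y l < q l)].

Lemma mem_gen (R : realType) d (i : 'I_d) (p q a b y : point R d) :
  (forall l, l != i -> p l = a l) -> (forall l, l != i -> q l = b l) ->
  in_rect p q y = (p i <= y i < q i) && Eo i a b y.
Proof.
move=> hp hq; apply/in_rectP/andP.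
  move=> h; split; first exact: h.
  by apply/forallP => l; apply/implyP => ne; rewrite -hp // -hq //; exact: h.
case=> h1 /forallP h2 l; case: (eqVneq l i) => [->//|ne].
by have := implyP (h2 l) ne; rewrite hp // hq.
Qed.

Lemma Eo_shift (R : realType) d (i : 'I_d) (a b y : point R d) s :
  Eo i a b (shift_e i s y) = Eo i a b y.
Proof.
apply: eq_forallb => l; rewrite /shift_e; case: eqVneq => [->|_] //.
Qed.

Lemma shift_e_i (R : realType) d (i : 'I_d) s (y : point R d) : shift_e i s y i = y i + s.
Proof. by rewrite /shift_e eqxx. Qed.

Lemma rsE (R : realType) d (a b : point R d) i c hr hc h1 h2 y :
  restricted_shuffle (@ShuffleData R d a b i c hr hc h1 h2) y =
  if in_rect a b y then
    (if y i < c then shift_e i (b i - c) y else shift_e i (- (c - a i)) y)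
  else y.
Proof. by []. Qed.

Ltac fin i := let l := fresh "l" in apply: functional_extensionality => l; rewrite /shift_e;
  first [ done | (case: (eqVneq l i) => [->|_] /=; lra) ].

Lemma axis_pos (R : realType) d (a b v : point R d) i :
  is_rect a b -> cok a b -> cok (padd a v) (padd b v) ->
  (forall l, l != i -> v l = 0) -> b i - a i <= v i -> gen (tau a b v).
Proof.
move=> hr ca cq hv ht.
have hL := hr i.
have hrB : is_rect a (padd b v).
  move=> l; rewrite /padd; case: (eqVneq l i) => [->|ne]; first lra.
  by rewrite hv // addr0.
have cB : rect_in_cube a (padd b v).
  by apply: cok_rect => l; split; [case: (ca l) | case: (cq l)].
have c1 : a i < b i := hr i.
have c2 : b i < padd b v i by rewrite /padd; lra.
have pv y : padd y v = shift_e i (v i) y.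
  apply: functional_extensionality => l; rewrite /padd /shift_e.
  by case: eqVneq => [->|ne] //; rewrite hv // addr0.
have sv y : psub y v = shift_e i (- v i) y.
  apply: functional_extensionality => l; rewrite /psub /shift_e.
  by case: eqVneq => [->|ne] //; rewrite hv // subr0.
have agA : forall l, l != i -> a l = a l by [].
have agB : forall l, l != i -> b l = b l by [].
have agAv : forall l, l != i -> padd a v l = a l by move=> l ne; rewrite /padd hv // addr0.
have agBv : forall l, l != i -> padd b v l = b l by move=> l ne; rewrite /padd hv // addr0.
have mS p q s y : (forall l, l != i -> p l = a l) -> (forall l, l != i -> q l = b l) ->
   in_rect p q (shift_e i s y) = (p i <= y i + s < q i) && Eo i a b y.
  by move=> hp hq; rewrite (mem_gen _ hp hq) Eo_shift shift_e_i.
case: (ltrP (b i - a i) (v i)) => hlt; last first.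
  exists [:: @ShuffleData R d a (padd b v) i (b i) hrB cB c1 c2] => x _.
  rewrite /shuffle_product /= rsE /tau pv sv !(mem_gen _ agA agB) !(mem_gen _ agAv agBv)
    !(mem_gen _ agA agBv).
  case: (Eo i a b x); rewrite ?andbT ?andbF /=; last by [].
  by rewrite /padd; repeat case: ifP => ?; fin i.
have hrB2 : is_rect a (upd b i (a i + v i)).
  move=> l; rewrite /upd /=; case: (eqVneq l i) => [->|ne] /=; [lra | exact: hr].
have cB2 : rect_in_cube a (upd b i (a i + v i)).
  apply: cok_rect => l; split; first by case: (ca l).
  rewrite /upd /=; case: (eqVneq l i) => [_|ne] /=; last by case: (ca l).
  by case: (cq i); rewrite /padd => ? ?; lra.
have d1 : a i < a i + (v i - (b i - a i)) by lra.
have d2 : a i + (v i - (b i - a i)) < upd b i (a i + v i) i by rewrite /upd eqxx; lra.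
have agB2 : forall l, l != i -> upd b i (a i + v i) l = b l.
  by move=> l ne; rewrite /upd (negbTE ne).
exists [:: @ShuffleData R d a (upd b i (a i + v i)) i (a i + (v i - (b i - a i))) hrB2 cB2 d1 d2;
           @ShuffleData R d a (padd b v) i (b i) hrB cB c1 c2] => x _.
rewrite /shuffle_product /= [restricted_shuffle _ x]rsE /tau pv sv !(mem_gen _ agA agB)
    !(mem_gen _ agAv agBv) !(mem_gen _ agA agBv).
case hE: (Eo i a b x); rewrite ?andbT ?andbF /=; last first.
  by rewrite rsE (mem_gen _ agA agB2) hE andbF.
rewrite /padd; repeat case: ifP => ?.
all: rewrite rsE ?(mS _ _ _ _ agA agB2) ?(mem_gen _ agA agB2) ?shift_e_i hE ?andbT /upd eqxx.
all: repeat case: ifP => ?.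
all: fin i.
Qed.


Lemma tau_sym (R : realType) d (a b v : point R d) :
  D a b v -> forall x, tau a b v x = tau (padd a v) (padd b v) (fun l => - v l) x.
Proof.
move=> Dv x; rewrite !tauE !in_rect_shift.
have e1 : psub x (fun l => - v l) = padd x v by pteq.
have e2 : padd x (fun l => - v l) = psub x v by pteq.
rewrite e1 e2 psub_padd.
case: ifP => h; first by rewrite (DP Dv h).
by case: ifP.
Qed.

Lemma axis (R : realType) d (a b v : point R d) i :
  is_rect a b -> cok a b -> cok (padd a v) (padd b v) ->
  (forall l, l != i -> v l = 0) -> b i - a i <= `|v i| -> gen (tau a b v).
Proof.
move=> hr ca cq hv ht.
case: (lerP 0 (v i)) => hs.
  by apply: axis_pos hr ca cq hv _; rewrite ger0_norm in ht.
rewrite ltr0_norm // in ht.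
have Dv : D a b v by apply: (sepD (l := i)); rewrite ltr0_norm.
apply: (gen_ext (g := tau (padd a v) (padd b v) (fun l => - v l))); first by move=> x _; apply: tau_sym.
apply: (axis_pos (i := i)).
- by move=> l; have := hr l; rewrite /padd; lra.
- exact: cq.
- have -> : padd (padd a v) (fun l => - v l) = a by pteq.
  have -> : padd (padd b v) (fun l => - v l) = b by pteq.
  exact: ca.
- by move=> l ne; rewrite hv // oppr0.
- rewrite /padd; lra.
Qed.

Lemma ord_gt d (j : 'I_d) k (hk : (k < d)%N) :
  (k <= j)%N -> j != Ordinal hk -> (k < j)%N.
Proof.
move=> h ne; rewrite ltn_neqAle h andbT; apply: contra ne => /eqP e.
by apply/eqP/val_inj => /=; rewrite e.
Qed.

Lemma ord_vac d (j : 'I_d) k : (d <= k)%N -> (k <= j)%N -> False.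
Proof. by move=> hkd hj; have := leq_trans hkd hj; rewrite leqNgt ltn_ord. Qed.

Lemma tau0 (R : realType) d (a b v : point R d) :
  (forall l, v l = 0) -> gen (tau a b v).
Proof.
move=> hv; apply: (gen_ext (g := id)); last exact: gen_id.
move=> x _.
have e1 : padd x v = x by apply: functional_extensionality => l; rewrite /padd hv addr0.
have e2 : psub x v = x by apply: functional_extensionality => l; rewrite /psub hv subr0.
by rewrite tauE e1 e2 /=; case: ifP => //; case: ifP.
Qed.

Lemma chain (R : realType) d k : forall (a b v : point R d),
  is_rect a b -> cok a b -> cok (padd a v) (padd b v) ->
  (forall j : 'I_d, (k <= j)%N -> v j = 0) ->
  (forall j, v j = 0 \/ b j - a j <= `|v j|) -> gen (tau a b v).
Proof.
elim: k => [|k IH] a b v hr ca cq hs hn.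
  by apply: tau0 => l; apply: hs.
case: (ltnP k d) => hkd; last first.
  by apply: IH => // j hj; case: (ord_vac hkd hj).
pose j0 := Ordinal hkd.
case: (eqVneq (v j0) 0) => h0.
  apply: IH => // j hj; case: (eqVneq j j0) => [->//|ne].
  by apply: hs; apply: ord_gt ne.
have n0 : b j0 - a j0 <= `|v j0| by case: (hn j0) => // e; rewrite e eqxx in h0.
pose w := upd v j0 0.
have wj0 : w j0 = 0 by rewrite /w /upd eqxx.
have wl l : l != j0 -> w l = v l by move=> ne; rewrite /w /upd (negbTE ne).
case: (boolP [exists l, w l != 0]) => hex; last first.
  apply: (axis (i := j0)) => // l ne; rewrite -wl //.
  by apply/eqP; move: hex; rewrite negb_exists => /forallP /(_ l); rewrite negbK.
case/existsP: hex => l hl.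
have lne : l != j0 by apply: contraNneq hl => ->; rewrite wj0.
have nl : b l - a l <= `|w l|.
  rewrite wl //; case: (hn l) => // e; by rewrite wl // e eqxx in hl.
have Dv : D a b v := sepD n0.
have Dw : D a b w := sepD nl.
have Dr : D (padd a w) (padd b w) (psub v w).
  by apply: (sepD (l := j0)); rewrite /padd /psub wj0 !addr0 subr0.
have hrw : is_rect (padd a w) (padd b w) by move=> j; have := hr j; rewrite /padd; lra.
have cw : cok (padd a w) (padd b w).
  move=> j; rewrite /padd; case: (eqVneq j j0) => [->|ne].
    by rewrite wj0 !addr0.
  by rewrite wl //; case: (cq j).
have gw : gen (tau a b w).
  apply: IH => //.
  - move=> j hj; case: (eqVneq j j0) => [->//|ne].
    by rewrite wl //; apply: hs; apply: ord_gt ne.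
  - move=> j; case: (eqVneq j j0) => [->|ne]; first by left.
    by rewrite wl //; apply: hn.
have e1 : padd (padd a w) (psub v w) = padd a v by pteq.
have e2 : padd (padd b w) (psub v w) = padd b v by pteq.
have gr : gen (tau (padd a w) (padd b w) (psub v w)).
  apply: (axis (i := j0)) => //.
  - by rewrite e1 e2.
  - by move=> j ne; rewrite /psub wl // subrr.
  - by rewrite /padd /psub wj0 !addr0 subr0.
have cubeR : forall x, in_cube x -> in_cube (tau (padd a w) (padd b w) (psub v w) x).
  by apply: tau_cube; [apply: cok_rect | rewrite e1 e2; apply: cok_rect].
have cubeW : forall x, in_cube x -> in_cube (tau a b w x).
  by apply: tau_cube; apply: cok_rect.
apply: (gen_ext (g := fun x => tau (padd a w) (padd b w) (psub v w)
      (tau a b w (tau (padd a w) (padd b w) (psub v w) x)))); first by move=> x _; apply: conj_tau.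
apply: gen_comp => //; last by move=> x hx; apply: cubeW; apply: cubeR.
exact: gen_comp.
Qed.

Lemma D_sub (R : realType) d (a b a' b' v : point R d) :
  (forall l, a l <= a' l) -> (forall l, b' l <= b l) -> D a b v -> D a' b' v.
Proof.
move=> ha hb Dv x; apply/negP => /andP[/in_rectP h1 /in_rectP h2].
have := Dv x; rewrite negb_and => /orP[] /negP; apply.
  by apply/in_rectP => l; have := h1 l; have := ha l; have := hb l; move=> ? ? /andP[? ?];
    apply/andP; split; lra.
apply/in_rectP => l; have := h2 l; have := ha l; have := hb l; rewrite /padd;
  move=> ? ? /andP[? ?]; apply/andP; split; lra.
Qed.

Lemma upd_eq (R : realType) d (p : point R d) j c : upd p j c j = c.
Proof. by rewrite /upd eqxx. Qed.
Lemma upd_ne (R : realType) d (p : point R d) j c l : l != j -> upd p j c l = p l.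
Proof. by move=> ne; rewrite /upd (negbTE ne). Qed.

Lemma splitall (R : realType) d m : forall (a b v : point R d),
  is_rect a b -> cok a b -> cok (padd a v) (padd b v) -> D a b v ->
  (forall j : 'I_d, (m <= j)%N -> v j = 0 \/ b j - a j <= `|v j|) -> gen (tau a b v).
Proof.
elim: m => [|m IH] a b v hr ca cq Dv hn.
  apply: (chain (k := d)) => //; first by move=> j hj; case: (ord_vac (leqnn d) hj).
  by move=> j; apply: hn.
case: (ltnP m d) => hmd; last first.
  by apply: IH => // j hj; case: (ord_vac hmd hj).
pose j0 := Ordinal hmd.
have hn' : forall (a b : point R d), (forall j : 'I_d, (m < j)%N -> v j = 0 \/ b j - a j <= `|v j|) ->
    (v j0 = 0 \/ b j0 - a j0 <= `|v j0|) ->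
    forall j : 'I_d, (m <= j)%N -> v j = 0 \/ b j - a j <= `|v j|.
  move=> a1 b1 h1 h2 j hj; case: (eqVneq j j0) => [->//|ne].
  by apply: h1; apply: ord_gt ne.
have nej : forall j : 'I_d, (m < j)%N -> j != j0.
  by move=> j hj; apply: contraTneq hj => ->; rewrite ltnn.
case: (eqVneq (v j0) 0) => h0.
  by apply: IH => //; apply: hn'; [exact: hn | left].
have vp : 0 < `|v j0| by rewrite normr_gt0.
suff main : forall n (a b : point R d), is_rect a b -> cok a b -> cok (padd a v) (padd b v) ->
    D a b v -> (forall j : 'I_d, (m < j)%N -> v j = 0 \/ b j - a j <= `|v j|) ->
    b j0 - a j0 <= n%:R * `|v j0| -> gen (tau a b v).
  apply: (main (Num.Def.archi_bound ((b j0 - a j0) / `|v j0|))) => //.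
  have hL := hr j0.
  have hq : 0 <= (b j0 - a j0) / `|v j0| by apply: divr_ge0; lra.
  by have := archi_boundP hq; rewrite ltr_pdivrMr // => /ltW.
elim=> [|n IHn] a1 b1 hr1 ca1 cq1 D1 hn1 hw.
  by rewrite mul0r in hw; have := hr1 j0; lra.
case: (lerP (b1 j0 - a1 j0) `|v j0|) => hle.
  by apply: IH => //; apply: hn' => //; right.
set c := a1 j0 + `|v j0|.
have hc : a1 j0 <= c <= b1 j0 by apply/andP; split; rewrite /c; lra.
have hrj := hr1 j0.
have [ca0 ca1'] := ca1 j0.
have [cq0 cq1'] := cq1 j0.
move: cq0 cq1'; rewrite /padd => cq0 cq1'.
apply: (gen_ext (g := fun x => tau a1 (upd b1 j0 c) v (tau (upd a1 j0 c) b1 v x))).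
  by move=> x _; apply: split_tau.
apply: gen_comp.
- apply: IH.
  + move=> l; case: (eqVneq l j0) => [->|ne]; first by rewrite upd_eq /c; lra.
    by rewrite upd_ne //; apply: hr1.
  + move=> l; case: (eqVneq l j0) => [->|ne]; first by rewrite upd_eq /c; split; lra.
    by rewrite upd_ne //; apply: ca1.
  + move=> l; rewrite /padd; case: (eqVneq l j0) => [->|ne]; first by rewrite upd_eq /c; split; lra.
    by rewrite upd_ne //; apply: cq1.
  + apply: D_sub D1 => // l; case: (eqVneq l j0) => [->|ne]; first by rewrite upd_eq /c; lra.
    by rewrite upd_ne.
  + apply: hn' => //; last by right; rewrite upd_eq /c; lra.
    by move=> j hj; rewrite upd_ne ?nej //; apply: hn1.
- apply: IHn.
  + move=> l; case: (eqVneq l j0) => [->|ne]; first by rewrite upd_eq /c; lra.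
    by rewrite upd_ne //; apply: hr1.
  + move=> l; case: (eqVneq l j0) => [->|ne]; first by rewrite upd_eq /c; split; lra.
    by rewrite upd_ne //; apply: ca1.
  + move=> l; rewrite /padd; case: (eqVneq l j0) => [->|ne]; first by rewrite upd_eq /c; split; lra.
    by rewrite upd_ne //; apply: cq1.
  + apply: D_sub D1 => // l; case: (eqVneq l j0) => [->|ne]; first by rewrite upd_eq /c; lra.
    by rewrite upd_ne.
  + by move=> j hj; rewrite upd_ne ?nej //; apply: hn1.
  + rewrite upd_eq /c; move: hw; rewrite -natr1 mulrDl mul1r; lra.
- apply: tau_cube; apply: cok_rect.
    move=> l; case: (eqVneq l j0) => [->|ne]; first by rewrite upd_eq /c; split; lra.
    by rewrite upd_ne //; apply: ca1.
  move=> l; rewrite /padd; case: (eqVneq l j0) => [->|ne]; first by rewrite upd_eq /c; split; lra.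
  by rewrite upd_ne //; apply: cq1.
Qed.

Theorem mainTheorem17 (R : realType) (d : nat) (hd : (1 <= d)%N)
    (a b v : point R d) :
  is_rect a b ->
  rect_in_cube a b ->
  rect_in_cube (padd a v) (padd b v) ->
  (forall x, ~~ (in_rect a b x && in_rect (padd a v) (padd b v) x)) ->
  exists s : seq (shuffle_data R d),
    forall x, in_cube x -> tau a b v x = shuffle_product s x.
Proof.
move=> hr hc hq hD.
have hr' : is_rect (padd a v) (padd b v) by move=> l; have := hr l; rewrite /padd; lra.
apply: (splitall (m := d)) => //.
- exact: rect_cok.
- exact: rect_cok.
- by move=> j hj; case: (ord_vac (leqnn d) hj).
Qed.
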